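(* Let $\mathbb N$ be a strongly connected symmetric directed graph on $m$ vertices without self-arcs, with arc matrices $C_{ij}$ (each with $n$ columns, orthonormal rows) such that $\bar{\mathbb N}$ is well-configured. Let $\mathbb N(0),\mathbb N(1),\dots$ be a sequence of symmetric spanning subgraphs of $\mathbb N$ such that every arc of $\mathbb N$ belongs to $\mathbb N(t)$ for infinitely many $t$. Let $\mathcal N_i(t)$ be the neighbor set of $i$ in $\mathbb N(t)$, $d_i(t)=|\mathcal N_i(t)|$, and $w_{ij}(t)=1/(1+\max\{d_i(t),d_j(t)\})$ for $j\in\mathcal N_i(t)$. For arbitrary $x_i(0)\in\mathbb R^n$, define $$x_i(t+1)=x_i(t)-\frac12\sum_{j\in\mathcal N_i(t)}w_{ij}(t)\big(C_{ij}'C_{ij}+C_{ji}'C_{ji}\big)\big(x_i(t)-x_j(t)\big).$$ Then there exists $x^*\in\mathbb R^n$ with $x_i(t)\to x^*$ as $t\to\infty$ for all $i$.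
   Context: A directed graph is symmetric if whenever $(i,j)$ is an arc so is $(j,i)$. A spanning subgraph of $\mathbb N$ has the same vertex set and a subset of the arcs. Each arc $(j,i)$ of $\mathbb N$ carries a real matrix $C_{ji}$ with $n$ columns; $'$ denotes transpose. $\bar{\mathbb N}$ is well-configured if for all $x_1,\dots,x_m\in\mathbb R^n$, $C_{ji}x_i=C_{ji}x_j$ for every arc $(j,i)$ of $\mathbb N$ implies $x_1=\cdots=x_m$. *)

(* Defs.v *)
From HB Require Import structures.
From mathcomp Require Import all_boot all_order all_algebra.
From mathcomp Require Import all_classical all_reals all_analysis.
Set Implicit Arguments. Unset Strict Implicit. Unset Printing Implicit Defensive.
Import Order.TTheory GRing.Theory Num.Theory.
Local Open Scope ring_scope.

(* A directed graph on vertices 'I_m is a relation e; e j i means (j,i) is an arc. *)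
Definition symmetric_graph (m : nat) (e : rel 'I_m) : Prop :=
  forall i j, e i j -> e j i.

Definition no_self_arcs (m : nat) (e : rel 'I_m) : Prop :=
  forall i, ~~ e i i.

Definition strongly_connected (m : nat) (e : rel 'I_m) : Prop :=
  forall i j, connect e i j.

Definition spanning_subgraph (m : nat) (f e : rel 'I_m) : Prop :=
  forall i j, f i j -> e i j.

(* Arc (j,i) carries C j i : 'M_(r j i, n). *)
Definition well_configured (R : realType) (m n : nat) (e : rel 'I_m)
  (r : 'I_m -> 'I_m -> nat) (C : forall i j : 'I_m, 'M[R]_(r i j, n)) : Prop :=
  forall x : 'I_m -> 'cV[R]_n,
    (forall j i, e j i -> C j i *m x i = C j i *m x j) ->
    forall i j, x i = x j.

Definition orthonormal_rows (R : realType) (k n : nat) (A : 'M[R]_(k, n)) : Prop :=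
  A *m A^T = 1%:M.

Definition neighbors (m : nat) (f : rel 'I_m) (i : 'I_m) : {set 'I_m} :=
  [set j | f i j].

Definition degree (m : nat) (f : rel 'I_m) (i : 'I_m) : nat := #|neighbors f i|.

Definition weight (R : realType) (m : nat) (f : rel 'I_m) (i j : 'I_m) : R :=
  (1 + (maxn (degree f i) (degree f j))%:R)^-1.

(* Main.v *)
Require Import Defs.
From HB Require Import structures.
From mathcomp Require Import all_boot all_order all_algebra.
From mathcomp Require Import all_classical all_reals all_analysis.
From mathcomp Require Import ring lra.
Import Order.TTheory GRing.Theory Num.Theory.
Import numFieldNormedType.Exports.
Local Open Scope ring_scope.

Module Aux.
Set Implicit Arguments. Unset Strict Implicit.
Lemma addBBC (V : zmodType) (a b c d : V) : a - b - (c - d) = (a - c) - (b - d).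
Proof. by rewrite !opprB addrACA [RHS]addrACA [- b + _]addrC. Qed.

Section Vec.
Variable R : realFieldType.
Section D.
Variable n : nat.
Implicit Types u v w : 'cV[R]_n.

Definition dotv u v : R := (u^T *m v) 0 0.
Definition sqv u : R := dotv u u.

Lemma dotvE u v : dotv u v = \sum_k u k 0 * v k 0.
Proof. by rewrite /dotv mxE; apply: eq_bigr => k _; rewrite mxE. Qed.

Lemma dotvC u v : dotv u v = dotv v u.
Proof. by rewrite !dotvE; apply: eq_bigr => k _; rewrite mulrC. Qed.

Lemma dotvDl u v w : dotv (u + v) w = dotv u w + dotv v w.
Proof. by rewrite !dotvE -big_split; apply: eq_bigr => k _; rewrite mxE mulrDl. Qed.

Lemma dotvDr u v w : dotv w (u + v) = dotv w u + dotv w v.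
Proof. by rewrite dotvC dotvDl !(dotvC w). Qed.

Lemma dotvNl u v : dotv (- u) v = - dotv u v.
Proof. by rewrite !dotvE -sumrN; apply: eq_bigr => k _; rewrite mxE mulNr. Qed.

Lemma dotvNr u v : dotv u (- v) = - dotv u v.
Proof. by rewrite dotvC dotvNl dotvC. Qed.

Lemma dotvBl u v w : dotv (u - v) w = dotv u w - dotv v w.
Proof. by rewrite dotvDl dotvNl. Qed.

Lemma dotvBr u v w : dotv w (u - v) = dotv w u - dotv w v.
Proof. by rewrite dotvDr dotvNr. Qed.

Lemma dotvZl a u v : dotv (a *: u) v = a * dotv u v.
Proof. by rewrite !dotvE mulr_sumr; apply: eq_bigr => k _; rewrite mxE mulrA. Qed.

Lemma dotvZr a u v : dotv u (a *: v) = a * dotv u v.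
Proof. by rewrite dotvC dotvZl dotvC. Qed.

Lemma dotv_suml (I : finType) (P : pred I) (z : I -> 'cV[R]_n) v :
  dotv (\sum_(j | P j) z j) v = \sum_(j | P j) dotv (z j) v.
Proof.
rewrite dotvE; under eq_bigr => k _ do rewrite summxE mulr_suml.
rewrite exchange_big /=; apply: eq_bigr => j _; by rewrite dotvE.
Qed.

Lemma dotv_sumr (I : finType) (P : pred I) (z : I -> 'cV[R]_n) v :
  dotv v (\sum_(j | P j) z j) = \sum_(j | P j) dotv v (z j).
Proof. by rewrite dotvC dotv_suml; apply: eq_bigr => j _; rewrite dotvC. Qed.

End D.
Arguments dotv {n}. Arguments sqv {n}.
Lemma dotv_mulmx n k (A : 'M[R]_(k, n)) u (w : 'cV[R]_k) :
  dotv w (A *m u) = dotv (A^T *m w) u.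
Proof. by rewrite /dotv trmx_mul trmxK mulmxA. Qed.

Section E.
Variable n : nat.
Implicit Types u v w : 'cV[R]_n.
Lemma sqv_ge0 u : 0 <= sqv u.
Proof. by rewrite /sqv dotvE; apply: sumr_ge0 => k _; rewrite -expr2 sqr_ge0. Qed.

Lemma sqv_eq0 u : sqv u = 0 -> u = 0.
Proof.
rewrite /sqv dotvE => /psumr_eq0P H; apply/matrixP => k j.
rewrite (ord1 j) mxE; have /eqP := H (fun _ _ => (ltac:(by rewrite -expr2 sqr_ge0))) k isT.
by rewrite mulf_eq0 orbb => /eqP.
Qed.

Lemma sqvD u v : sqv (u + v) = sqv u + 2 * dotv u v + sqv v.
Proof. by rewrite /sqv dotvDl !dotvDr (dotvC v u); ring. Qed.

Lemma sqvB u v : sqv (u - v) = sqv u - 2 * dotv u v + sqv v.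
Proof. by rewrite /sqv !(dotvDl, dotvDr, dotvNl, dotvNr) (dotvC v u) opprK; ring. Qed.

Lemma sqvN u : sqv (- u) = sqv u.
Proof. by rewrite /sqv dotvNl dotvNr opprK. Qed.

Lemma sqvZ a u : sqv (a *: u) = a ^+ 2 * sqv u.
Proof. by rewrite /sqv dotvZl dotvZr mulrA expr2. Qed.

Lemma sqvD_le u v : sqv (u + v) <= 2 * sqv u + 2 * sqv v.
Proof.
have := sqv_ge0 (u - v); rewrite sqvB => H.
rewrite sqvD; lra.
Qed.

Lemma sqvB_le u v : sqv (u - v) <= 2 * sqv u + 2 * sqv v.
Proof. by rewrite -(sqvN v); apply: sqvD_le. Qed.

Lemma sqv_half u v : sqv (u - 2^-1 *: v) = sqv u - dotv u v + 4^-1 * sqv v.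
Proof.
rewrite sqvB sqvZ dotvZr; congr (_ - _ + _); first by field.
by rewrite expr2 -invfM; congr (_^-1 * _); ring.
Qed.

Lemma wcs (I : finType) (P : pred I) (a : I -> R) (z : I -> 'cV[R]_n) :
  (forall j, 0 <= a j) ->
  sqv (\sum_(j | P j) a j *: z j) <= (\sum_(j | P j) a j) * \sum_(j | P j) a j * sqv (z j).
Proof.
move=> a0.
have H0 : 0 <= \sum_(j | P j) \sum_(k | P k) a j * a k * sqv (z j - z k).
  by apply: sumr_ge0 => j _; apply: sumr_ge0 => k _; rewrite !mulr_ge0 ?sqv_ge0.
set A := \sum_(j | P j) a j.
set B := \sum_(j | P j) a j * sqv (z j).
have Cq : sqv (\sum_(j | P j) a j *: z j) =
     \sum_(j | P j) \sum_(k | P k) a j * a k * dotv (z j) (z k).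
  rewrite /sqv dotv_suml; apply: eq_bigr => j _.
  rewrite dotvZl dotv_sumr mulr_sumr; apply: eq_bigr => k _.
  by rewrite dotvZr; ring.
have T1 : \sum_(j | P j) \sum_(k | P k) a j * a k * sqv (z j) = A * B.
  rewrite exchange_big /= /A /B mulr_suml; apply: eq_bigr => k _.
  rewrite mulr_sumr; apply: eq_bigr => j _; ring.
have T2 : \sum_(j | P j) \sum_(k | P k) a j * a k * sqv (z k) = A * B.
  rewrite /A /B mulr_suml; apply: eq_bigr => j _.
  rewrite mulr_sumr; apply: eq_bigr => k _; ring.
have E1 : \sum_(j | P j) \sum_(k | P k) a j * a k * sqv (z j - z k) =
   A * B + A * B - 2 * sqv (\sum_(j | P j) a j *: z j).
  rewrite -{1}T1 -T2 Cq mulr_sumr -big_split -sumrB /=; apply: eq_bigr => j _.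
  rewrite mulr_sumr -big_split -sumrB /=; apply: eq_bigr => k _.
  rewrite sqvB; ring.
rewrite E1 in H0; lra.
Qed.
End E.

Section Proj.
Variables (n k : nat) (Cm : 'M[R]_(k, n)).
Hypothesis orth : Cm *m Cm^T = 1%:M.

Lemma dotv_proj u : dotv u (Cm^T *m (Cm *m u)) = sqv (Cm *m u).
Proof. by rewrite dotv_mulmx trmxK. Qed.

Lemma sqv_proj u : sqv (Cm^T *m (Cm *m u)) = sqv (Cm *m u).
Proof.
rewrite /sqv dotv_mulmx trmxK !mulmxA orth mul1mx; done.
Qed.

Lemma sqv_C_le u : sqv (Cm *m u) <= sqv u.
Proof.
have := sqv_ge0 (u - Cm^T *m (Cm *m u)).
rewrite sqvB dotv_proj sqv_proj; lra.
Qed.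
End Proj.

Section Q.
Variables (n k1 k2 : nat) (C1 : 'M[R]_(k1, n)) (C2 : 'M[R]_(k2, n)).
Hypotheses (o1 : C1 *m C1^T = 1%:M) (o2 : C2 *m C2^T = 1%:M).

Lemma dotvQ d : dotv d ((C1^T *m C1 + C2^T *m C2) *m d) = sqv (C1 *m d) + sqv (C2 *m d).
Proof. by rewrite mulmxDl dotvDr -!mulmxA !dotv_proj. Qed.

Lemma sqvQ d : sqv ((C1^T *m C1 + C2^T *m C2) *m d) <= 2 * dotv d ((C1^T *m C1 + C2^T *m C2) *m d).
Proof.
rewrite dotvQ mulmxDl -!mulmxA; apply: le_trans (sqvD_le _ _) _.
by rewrite !sqv_proj // mulrDr.
Qed.
End Q.
End Vec.

Section Graph.
Variables (R : realType) (m n : nat) (r : 'I_m -> 'I_m -> nat)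
  (C : forall i j : 'I_m, 'M[R]_(r i j, n)).

Definition Qm (i j : 'I_m) : 'M[R]_n := (C i j)^T *m C i j + (C j i)^T *m C j i.
Definition Sv (v : 'I_m -> 'cV[R]_n) : R := \sum_i sqv (v i).
Definition mu : R := (1 + m%:R)^-1.

Lemma Qm_sym i j : Qm i j = Qm j i.
Proof. by rewrite /Qm addrC. Qed.

Lemma mu_gt0 : 0 < mu.
Proof. by rewrite /mu invr_gt0 ltr_pwDl. Qed.

Lemma mu_le1 : mu <= 1.
Proof. by rewrite /mu invf_le1 ?lerDl // ltr_pwDl. Qed.

Section F.
Variable f : rel 'I_m.
Hypothesis fsym : symmetric_graph f.

Lemma weight_sym i j : weight R f i j = weight R f j i.
Proof. by rewrite /weight maxnC. Qed.

Lemma degree_le i : (degree f i <= m)%N.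
Proof. by rewrite /degree; apply: leq_trans (max_card _) _; rewrite card_ord. Qed.

Lemma weight_ge i j : mu <= weight R f i j.
Proof.
rewrite /weight /mu lef_pV2 ?posrE ?ltr_pwDl //.
by rewrite lerD2l ler_nat geq_max !degree_le.
Qed.

Lemma weight_ge0 i j : 0 <= weight R f i j.
Proof. exact: le_trans (ltW mu_gt0) (weight_ge i j). Qed.

Lemma sum_weight_le i : \sum_(j in neighbors f i) weight R f i j <= 1 - mu.
Proof.
apply: (@le_trans _ _ (\sum_(j in neighbors f i) (1 + (degree f i)%:R)^-1)).
  apply: ler_sum => j _; rewrite /weight lef_pV2 ?posrE ?ltr_pwDl //.
  by rewrite lerD2l ler_nat leq_maxl.
rewrite sumr_const -/(degree f i).
have := degree_le i; set d := degree f i => dm.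
have -> : (1 + d%:R)^-1 *+ d = 1 - (1 + d%:R)^-1 :> R.
  rewrite -mulr_natr; field; by rewrite lt0r_neq0 ?ltr_pwDl.
rewrite lerD2l lerN2 /mu lef_pV2 ?posrE ?ltr_pwDl //.
by rewrite lerD2l ler_nat.
Qed.

Lemma swap_sum (F : 'I_m -> 'I_m -> R) :
  \sum_i \sum_(j in neighbors f i) F i j = \sum_i \sum_(j in neighbors f i) F j i.
Proof.
have E (G : 'I_m -> 'I_m -> R) : \sum_i \sum_(j in neighbors f i) G i j =
   \sum_i \sum_j (if f i j then G i j else 0).
  by apply: eq_bigr => i _; rewrite big_mkcond; apply: eq_bigr => j _; rewrite inE.
rewrite !E exchange_big /=; apply: eq_bigr => i _; apply: eq_bigr => j _.
case: (boolP (f i j)) => fij; first by rewrite (fsym fij).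
by case: (boolP (f j i)) => // /fsym; rewrite (negbTE fij).
Qed.
Definition stepv (v : 'I_m -> 'cV[R]_n) (i : 'I_m) : 'cV[R]_n :=
  v i - 2^-1 *: \sum_(j in neighbors f i) weight R f i j *: (Qm i j *m (v i - v j)).

Definition Ef (v : 'I_m -> 'cV[R]_n) : R :=
  \sum_i \sum_(j in neighbors f i) weight R f i j * dotv (v i - v j) (Qm i j *m (v i - v j)).

Hypothesis orth : forall i j, f i j -> C i j *m (C i j)^T = 1%:M.

Lemma Ef_term_ge0 v i j : f i j -> 0 <= dotv (v i - v j) (Qm i j *m (v i - v j)).
Proof.
by move=> fij; rewrite /Qm dotvQ ?orth ?fsym // addr_ge0 ?sqv_ge0.
Qed.

Lemma Ef_ge0 v : 0 <= Ef v.
Proof.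
apply: sumr_ge0 => i _; apply: sumr_ge0 => j; rewrite inE => fij.
by rewrite mulr_ge0 ?weight_ge0 ?Ef_term_ge0.
Qed.

Lemma le_sum_single (I : finType) (P : pred I) (F : I -> R) i0 :
  P i0 -> (forall i, P i -> 0 <= F i) -> F i0 <= \sum_(i | P i) F i.
Proof.
move=> Pi0 F0; rewrite (bigD1 i0) //= lerDl; apply: sumr_ge0 => i /andP[Pi _].
exact: F0.
Qed.

Lemma Ef_ge v i j : f i j -> mu * sqv (C i j *m (v i - v j)) <= Ef v.
Proof.
move=> fij.
apply: (@le_trans _ _ (\sum_(j0 in neighbors f i) weight R f i j0 *
   dotv (v i - v j0) (Qm i j0 *m (v i - v j0)))); last first.
  apply: (@le_sum_single _ xpredT (fun i => \sum_(j0 in neighbors f i) weight R f i j0 *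
   dotv (v i - v j0) (Qm i j0 *m (v i - v j0)))) => // i0 _.
  apply: sumr_ge0 => j0; rewrite inE => fij0.
  by rewrite mulr_ge0 ?weight_ge0 ?Ef_term_ge0.
apply: (@le_trans _ _ (weight R f i j * dotv (v i - v j) (Qm i j *m (v i - v j)))); last first.
  apply: (@le_sum_single _ (fun j0 => j0 \in neighbors f i) (fun j0 => weight R f i j0 *
   dotv (v i - v j0) (Qm i j0 *m (v i - v j0)))); first by rewrite inE.
  by move=> j0; rewrite inE => fij0; rewrite mulr_ge0 ?weight_ge0 ?Ef_term_ge0.
rewrite /Qm dotvQ ?orth ?fsym //; apply: ler_pM; rewrite ?(ltW mu_gt0) ?sqv_ge0 ?weight_ge //.
by rewrite lerDl sqv_ge0.
Qed.

Lemma step_dec v : Sv (stepv v) + mu / 2 * Ef v <= Sv v.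
Proof.
set q := fun i j => Qm i j *m (v i - v j).
set y := fun i => \sum_(j in neighbors f i) weight R f i j *: q i j.
have -> : Sv (stepv v) = Sv v - \sum_i dotv (v i) (y i) + 4^-1 * \sum_i sqv (y i).
  rewrite /Sv /stepv mulr_sumr -sumrB -big_split /=; apply: eq_bigr => i _.
  by rewrite sqv_half.
set A := \sum_i dotv (v i) (y i).
have HA : A + A = Ef v.
  have A1 : A = \sum_i \sum_(j in neighbors f i) weight R f i j * dotv (v i) (q i j).
    by apply: eq_bigr => i _; rewrite /y dotv_sumr; apply: eq_bigr => j _; rewrite dotvZr.
  have A2 : A = - \sum_i \sum_(j in neighbors f i) weight R f i j * dotv (v j) (q i j).
    rewrite A1 swap_sum -sumrN; apply: eq_bigr => i _; rewrite -sumrN.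
    apply: eq_bigr => j _; rewrite weight_sym /q Qm_sym -opprB mulmxN dotvNr.
    by rewrite mulrN.
  rewrite {1}A1 A2 -sumrB /Ef; apply: eq_bigr => i _; rewrite -sumrB.
  by apply: eq_bigr => j _; rewrite dotvBl mulrBr.
have HY : \sum_i sqv (y i) <= 2 * (1 - mu) * Ef v.
  rewrite /Ef mulr_sumr; apply: ler_sum => i _.
  pose Sw := \sum_(j in neighbors f i) weight R f i j.
  pose Sq := \sum_(j in neighbors f i) weight R f i j * sqv (q i j).
  pose Sd := \sum_(j in neighbors f i) weight R f i j * dotv (v i - v j) (Qm i j *m (v i - v j)).
  have h1 : sqv (y i) <= Sw * Sq.
    exact: (@wcs _ _ _ (fun j => j \in neighbors f i) (weight R f i) (q i) (weight_ge0 i)).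
  have h2 : Sw <= 1 - mu by exact: sum_weight_le.
  have h3 : 0 <= Sq by apply: sumr_ge0 => j _; rewrite mulr_ge0 ?weight_ge0 ?sqv_ge0.
  have h4 : Sq <= 2 * Sd.
    rewrite /Sq /Sd mulr_sumr; apply: ler_sum => j; rewrite inE => fij.
    rewrite mulrCA; apply: ler_wpM2l; first exact: weight_ge0.
    by rewrite /q /Qm; apply: sqvQ; apply: orth => //; apply: fsym.
  have h5 : 0 <= 1 - mu by rewrite subr_ge0 mu_le1.
  rewrite -/Sd; apply: (le_trans h1).
  apply: (@le_trans _ _ ((1 - mu) * Sq)); first exact: ler_wpM2r.
  by rewrite [2 * _]mulrC -mulrA; apply: ler_wpM2l.
set E := Ef v in HA HY *.
apply: (@le_trans _ _ (Sv v - A + 4^-1 * (2 * (1 - mu) * E) + mu / 2 * E)).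
  by rewrite lerD2r lerD2l ler_wpM2l // invr_ge0 ler0n.
rewrite -HA le_eqVlt; apply/orP; left; apply/eqP; field.
  by [].
Qed.
End F.

Lemma stepv_shift (f : rel 'I_m) (v p : 'I_m -> 'cV[R]_n) :
  symmetric_graph f ->
  (forall i j, f i j -> C i j *m (p i - p j) = 0) ->
  forall i, stepv f v i - p i = stepv f (fun i => v i - p i) i.
Proof.
move=> fs good i; rewrite /stepv.
suff -> : \sum_(j in neighbors f i) weight R f i j *: (Qm i j *m (v i - v j)) =
  \sum_(j in neighbors f i) weight R f i j *: (Qm i j *m (v i - p i - (v j - p j))).
  by rewrite addrAC.
apply: eq_bigr => j; rewrite inE => fij; congr (_ *: _).
rewrite addBBC.
have Hq : Qm i j *m (p i - p j) = 0.
  rewrite /Qm mulmxDl -!mulmxA good // -opprB mulmxN (good j i (fs _ _ fij)).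
  by rewrite oppr0 !mulmx0 addr0.
by rewrite [Qm i j *m (_ - (p i - p j))]mulmxBr Hq subr0.
Qed.
End Graph.

End Aux.
Import Aux.
Local Open Scope classical_set_scope.
Local Open Scope ring_scope.

Lemma cluster_exists (R : realType) m n (x : nat -> 'I_m -> 'cV[R]_n) (B : R) :
  (forall t i k, `|x t i k 0| <= B) ->
  exists p : 'I_m -> 'cV[R]_n, forall d, 0 < d -> forall N,
    exists2 t, (N <= t)%N & Sv (fun i => x t i - p i) < d.
Proof.
move=> xB.
pose X t : 'rV[R]_(m * n) := mxvec (\matrix_(i, k) x t i k 0).
have XE t i k : X t 0 (mxvec_index i k) = x t i k 0 by rewrite mxvecE mxE.
pose K := [set v : 'rV[R]_(m * n) | forall l, (`[- B, B]%classic : set R) (v ord0 l)].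
have cK : compact K.
  by apply: (@rV_compact _ _ (fun _ => `[- B, B]%classic)) => _; exact: segment_compact.
have FK : (X @ \oo) K.
  rewrite /=; apply: filterE => t l /=; case/mxvec_indexP: l => i k.
  by rewrite XE in_itv /= -ler_norml.
have [q [_ clq]] := cK (X @ \oo) _ FK.
exists (fun i => \col_k (vec_mx q) i k) => d d0 N.
set M := ((m * n)%:R : R).
have M0 : 0 <= M by rewrite ler0n.
pose eps := Order.min 1 (d / (M + 1)).
have e0 : 0 < eps by rewrite lt_min ltr01 divr_gt0 // ltr_pwDr.
have e1 : eps <= 1 by rewrite ge_min lexx.
have e2 : eps <= d / (M + 1) by rewrite ge_min lexx orbT.
have FA : (X @ \oo) [set X t | t in [set t | (N <= t)%N]].
  rewrite /=; apply: filterS (nbhs_infty_ge N) => t Nt; by exists t.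
have FB : nbhs q (ball q eps) by exact: nbhsx_ballx.
have := clq _ _ FA FB.
- case=> y [[t Nt <-] [_ Bq]]; exists t => //.
  apply: (@le_lt_trans _ _ (eps *+ n *+ m)).
    have sc k (c : R) : \sum_(i < k) c = c *+ k by rewrite sumr_const card_ord.
    rewrite /Sv -sc; apply: ler_sum => i _.
    rewrite /sqv dotvE -sc; apply: ler_sum => k _.
    have := Bq 0 (mxvec_index i k); rewrite /ball /= XE.
    rewrite -[in X in X - _](vec_mxK q) mxvecE !mxE => H.
    apply: (@le_trans _ _ (eps * eps)); last by rewrite ger_pMr.
    apply: le_trans (ler_norm _) _; rewrite normrM distrC.
    by apply: ler_pM; rewrite ?normr_ge0 // ltW.
  rewrite -mulrnA -mulr_natr mulnC -/M.
  apply: (@le_lt_trans _ _ (d / (M + 1) * M)); first by rewrite ler_wpM2r.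
  have -> : d / (M + 1) * M = d - d / (M + 1).
    by field; rewrite lt0r_neq0 // ltr_pwDr.
  by rewrite ltrBlDr ltrDl divr_gt0 // ltr_pwDr.
Qed.

Theorem theorem6 (R : realType) (m n : nat) (e : rel 'I_m)
  (r : 'I_m -> 'I_m -> nat) (C : forall i j : 'I_m, 'M[R]_(r i j, n))
  (Nt : nat -> rel 'I_m) (x : nat -> 'I_m -> 'cV[R]_n) :
  symmetric_graph e ->
  no_self_arcs e ->
  strongly_connected e ->
  (forall i j, e i j -> orthonormal_rows (C i j)) ->
  well_configured e C ->
  (forall t, symmetric_graph (Nt t)) ->
  (forall t, spanning_subgraph (Nt t) e) ->
  (forall i j, e i j -> forall T : nat, exists2 t : nat, (T <= t)%N & Nt t i j) ->
  (forall t i, x t.+1 i =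
     x t i - 2^-1 *: \sum_(j in neighbors (Nt t) i)
        weight R (Nt t) i j *:
          (((C i j)^T *m C i j + (C j i)^T *m C j i) *m (x t i - x t j))) ->
  exists xs : 'cV[R]_n, forall i, (fun t => x t i) @ \oo --> xs.
Proof.
move=> esym noself sconn orthC wc Ntsym Ntsub Ninf Hx.
have orthN t i j : Nt t i j -> C i j *m (C i j)^T = 1%:M.
  by move=> h; apply: orthC; apply: Ntsub h.
have Hstep t i : x t.+1 i = stepv C (Nt t) (x t) i by rewrite Hx.
have Sv0 (v : 'I_m -> 'cV[R]_n) : 0 <= Sv v by apply: sumr_ge0 => i _; apply: sqv_ge0.
have mu0 := @mu_gt0 R m.
have dec t : Sv (x t.+1) + @mu R m / 2 * Ef C (Nt t) (x t) <= Sv (x t).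
  have -> : Sv (x t.+1) = Sv (stepv C (Nt t) (x t)).
    by apply: eq_bigr => i _; rewrite Hstep.
  exact: (step_dec (Ntsym t) (@orthN t)).
have mono1 t : Sv (x t.+1) <= Sv (x t).
  by apply: le_trans (dec t); rewrite lerDl mulr_ge0 ?Ef_ge0 // divr_ge0 ?ler0n // ltW.
have mono t d : Sv (x (t + d)%N) <= Sv (x t).
  elim: d => [|d IH]; first by rewrite addn0.
  by rewrite addnS; apply: le_trans (mono1 _) IH.
have Dlim (eta : R) : 0 < eta ->
    exists N, forall t, (N <= t)%N -> Sv (x t) - Sv (x t.+1) < eta.
  move=> eta0; apply: contrapT => H.
  have H1 N : exists2 t, (N <= t)%N & eta <= Sv (x t) - Sv (x t.+1).
    apply: contrapT => H2; apply: H; exists N => t NT; rewrite ltNge; apply/negP => H3.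
    by apply: H2; exists t.
  have H2 k : exists T, Sv (x T) <= Sv (x 0%N) - k%:R * eta.
    elim: k => [|k [T HT]]; first by exists 0%N; rewrite mul0r subr0.
    have [t Tt Ht] := H1 T; exists t.+1.
    have := mono T (t - T)%N; rewrite subnKC // => Hm.
    rewrite -natr1 mulrDl mul1r opprD addrA; lra.
  have [T HT] := H2 (Num.Def.archi_bound (Sv (x 0%N) / eta)).
  have := archi_boundP (divr_ge0 (Sv0 (x 0%N)) (ltW eta0)).
  rewrite ltr_pdivrMr // => Hb.
  have := Sv0 (x T); lra.
have Bd t i k : `|x t i k 0| <= 1 + Sv (x 0%N).
  have h1 : x t i k 0 * x t i k 0 <= Sv (x t).
    apply: (@le_trans _ _ (sqv (x t i))).
      rewrite /sqv dotvE; apply: (@le_sum_single _ _ xpredT (fun k => x t i k 0 * x t i k 0)) => // k0 _.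
      by rewrite -expr2 sqr_ge0.
    by apply: (@le_sum_single _ _ xpredT (fun i => sqv (x t i))) => // i0 _; apply: sqv_ge0.
  have h2 : Sv (x t) <= Sv (x 0%N) by have := mono 0%N t; rewrite add0n.
  have h3 : `|x t i k 0| * `|x t i k 0| = x t i k 0 * x t i k 0.
    by rewrite -normrM ger0_norm // -expr2 sqr_ge0.
  have h4 := normr_ge0 (x t i k 0).
  nra.
have [p Hp] := @cluster_exists R m n x _ Bd.
have stepp t : (forall i j, Nt t i j -> C i j *m (p i - p j) = 0) ->
    Sv (fun i => x t.+1 i - p i) <= Sv (fun i => x t i - p i).
  move=> g.
  have -> : Sv (fun i => x t.+1 i - p i) = Sv (stepv C (Nt t) (fun i => x t i - p i)).
    by apply: eq_bigr => i _; rewrite Hstep (stepv_shift _ (Ntsym t) g).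
  apply: le_trans (step_dec (Ntsym t) (@orthN t) _).
  by rewrite lerDl mulr_ge0 ?Ef_ge0 // divr_ge0 ?ler0n // ltW.
have good : forall i j, e i j -> C i j *m (p i - p j) = 0.
  move=> i0 j0 e0; apply/eqP; apply/negPn/negP => bad0.
  pose g := fun ij : 'I_m * 'I_m => sqv (C ij.1 ij.2 *m (p ij.1 - p ij.2)).
  pose badb := fun ij : 'I_m * 'I_m => e ij.1 ij.2 && (C ij.1 ij.2 *m (p ij.1 - p ij.2) != 0).
  pose beta := \big[Order.min/1]_(ij | badb ij) g ij.
  have gpos ij : badb ij -> 0 < g ij.
    case/andP=> _ nz; rewrite lt0r sqv_ge0 andbT; apply/negP => /eqP /sqv_eq0 h.
    by rewrite h eqxx in nz.
  have beta0 : 0 < beta by apply: lt_bigmin => //; rewrite ltr01.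
  have betale ij : badb ij -> beta <= g ij by move=> h; apply: bigmin_le_cond.
  pose c := @mu R m / 2 * @mu R m.
  have c0 : 0 < c by rewrite mulr_gt0 ?divr_gt0.
  have [N HN] := Dlim (c * beta / 8) (ltac:(by rewrite divr_gt0 ?mulr_gt0)).
  have [t0 t0N Ht0] := Hp (beta / 16) (ltac:(by rewrite divr_gt0)) N.
  pose P s := (t0 <= s)%N && [exists ij, Nt s ij.1 ij.2 && badb ij].
  have exP : exists s, P s.
    have [t t0t Nti] := Ninf i0 j0 e0 t0; exists t; rewrite /P t0t /=.
    by apply/existsP; exists (i0, j0); rewrite /= Nti /badb /= e0 bad0.
  case: (ex_minnP exP) => s /andP[t0s /existsP[[i j] /andP[Ntij badij]]] smin.
  have gd t : (t0 <= t)%N -> (t < s)%N -> forall i j, Nt t i j -> C i j *m (p i - p j) = 0.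
    move=> h1 h2 i1 j1 h3; apply/eqP; apply/negPn/negP => h4.
    have : P t by rewrite /P h1 /=; apply/existsP; exists (i1, j1); rewrite /= h3 /badb /= h4 (Ntsub _ _ _ h3).
    by move/smin; rewrite leqNgt h2.
  have close d : (t0 + d <= s)%N -> Sv (fun i => x (t0 + d)%N i - p i) <= Sv (fun i => x t0 i - p i).
    elim: d => [|d IH h]; first by rewrite addn0.
    have h' : (t0 + d < s)%N by rewrite -addnS.
    apply: (le_trans _ (IH (ltnW h'))).
    rewrite addnS; apply: stepp; apply: gd => //; exact: leq_addr.
  have Hs : Sv (fun i => x s i - p i) < beta / 16.
    apply: (le_lt_trans _ Ht0); have := close (s - t0)%N; rewrite subnKC //; exact.
  have HD : Sv (x s) - Sv (x s.+1) < c * beta / 8 by apply: HN; exact: leq_trans t0N t0s.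
  have Ha : c * sqv (C i j *m (x s i - x s j)) <= Sv (x s) - Sv (x s.+1).
    have := dec s; have := Ef_ge C (x s) Ntij; rewrite /c -mulrA => h1 h2.
    have : @mu R m / 2 * (@mu R m * sqv (C i j *m (x s i - x s j))) <= @mu R m / 2 * Ef C (Nt s) (x s).
      by apply: ler_wpM2l => //; rewrite divr_ge0 ?ltW.
    lra.
  have Ha' : sqv (C i j *m (x s i - x s j)) < beta / 8.
    rewrite -(ltr_pM2l c0); apply: le_lt_trans Ha _; by rewrite mulrA.
  have oij := orthN s i j Ntij.
  have Hb : sqv (C i j *m ((x s i - p i) - (x s j - p j))) <= 4 * Sv (fun i => x s i - p i).
    apply: le_trans (sqv_C_le oij _) _; apply: le_trans (sqvB_le _ _) _.
    have h1 : sqv (x s i - p i) <= Sv (fun i => x s i - p i) :=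
      @le_sum_single R 'I_m xpredT (fun i => sqv (x s i - p i)) i isT (fun _ _ => sqv_ge0 _).
    have h2 : sqv (x s j - p j) <= Sv (fun i => x s i - p i) :=
      @le_sum_single R 'I_m xpredT (fun i => sqv (x s i - p i)) j isT (fun _ _ => sqv_ge0 _).
    move: h1 h2; set S := Sv _; set a1 := sqv _; set a2 := sqv _ => h1 h2; lra.
  have Hg : g (i, j) <= 2 * sqv (C i j *m (x s i - x s j)) + 2 * sqv (C i j *m ((x s i - p i) - (x s j - p j))).
    rewrite /g /=; apply: le_trans (sqvB_le _ _); rewrite -mulmxBr.
    by rewrite addBBC !subKr.
  have := betale _ badij; lra.
have cons : forall i j, p i = p j.
  apply: wc => j i eji; apply/eqP; rewrite eq_sym -subr_eq0 -mulmxBr.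
  by apply/eqP; apply: good.
have monop t d : Sv (fun i => x (t + d)%N i - p i) <= Sv (fun i => x t i - p i).
  elim: d => [|d IH]; first by rewrite addn0.
  rewrite addnS; apply: le_trans IH; apply: stepp => i j h.
  by apply: good; apply: Ntsub h.
have [m0|mpos] := posnP m.
  by exists 0 => i; exfalso; case: i => i; rewrite m0.
exists (p (Ordinal mpos)) => i; rewrite -(cons i).
apply/cvg_ballP => eps e0.
have [t0 _ Ht0] := Hp (eps * eps) (mulr_gt0 e0 e0) 0%N.
apply: filterS (nbhs_infty_ge t0) => t t0t.
split => // k j; rewrite (ord1 j) /ball /=.
have := monop t0 (t - t0)%N; rewrite subnKC // => h.
have hk : (x t i k 0 - p i k 0) * (x t i k 0 - p i k 0) < eps * eps.
  apply: le_lt_trans Ht0; apply: le_trans h.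
  apply: (@le_trans _ _ (sqv (x t i - p i))).
    rewrite /sqv dotvE; apply: (@le_trans _ _ ((x t i - p i) k 0 * (x t i - p i) k 0)).
      by rewrite !mxE.
    apply: (@le_sum_single _ _ xpredT (fun k => (x t i - p i) k 0 * (x t i - p i) k 0)) => // k0 _.
    by rewrite -expr2 sqr_ge0.
  exact: (@le_sum_single _ _ xpredT (fun i => sqv (x t i - p i)) i isT (fun _ _ => sqv_ge0 _)).
rewrite ltNge; apply/negP => H.
move: hk; rewrite ltNge => /negP; apply.
have -> : (x t i k 0 - p i k 0) * (x t i k 0 - p i k 0) =
  `|p i k 0 - x t i k 0| * `|p i k 0 - x t i k 0|.
  by rewrite -normrM -[p i k 0 - _]opprB mulrNN ger0_norm // -expr2 sqr_ge0.
by apply: ler_pM => //; apply: ltW.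
Qed.
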